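(* Let $c_1,c_2\ge 2$ be integers, let $d$ be prime, and let $f:\mathbb{Z}_{c_1}\times\mathbb{Z}_{c_2}\to\mathbb{Z}_d$ be a function that cannot be written as $f(s_1,s_2)=g_1(s_1)+g_2(s_2)$ (mod $d$) for any functions $g_1:\mathbb{Z}_{c_1}\to\mathbb{Z}_d$, $g_2:\mathbb{Z}_{c_2}\to\mathbb{Z}_d$. Then the only non-signaling distribution $p(m_1,m_2|s_1,s_2)$ on $\mathbb{Z}_d^2$ satisfying $p(m_1+m_2\equiv f(s_1,s_2)\,|\,s_1,s_2)=1$ for all $(s_1,s_2)$ is $$p(m_1,m_2|s_1,s_2)=\begin{cases}d^{-1}&\text{if } m_1+m_2\equiv f(s_1,s_2)\pmod d,\\0&\text{otherwise.}\end{cases}$$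
   Context: A bipartite conditional distribution $p(m_1,m_2|s_1,s_2)$ with $m_1,m_2\in\mathbb{Z}_d$ and $s_j\in\mathbb{Z}_{c_j}$ is non-signaling if the marginal $\sum_{m_2}p(m_1,m_2|s_1,s_2)$ does not depend on $s_2$ and the marginal $\sum_{m_1}p(m_1,m_2|s_1,s_2)$ does not depend on $s_1$. *)

(* Defs.v *)
From HB Require Import structures.
From mathcomp Require Import all_boot all_order all_algebra.
Set Implicit Arguments. Unset Strict Implicit. Unset Printing Implicit Defensive.
Import Order.TTheory GRing.Theory Num.Theory.
Local Open Scope ring_scope.

Definition cond_distr (R : realFieldType) (d c1 c2 : nat)
  (p : 'Z_d -> 'Z_d -> 'I_c1 -> 'I_c2 -> R) : Prop :=
  (forall m1 m2 s1 s2, 0 <= p m1 m2 s1 s2) /\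
  (forall s1 s2, \sum_(m1 : 'Z_d) \sum_(m2 : 'Z_d) p m1 m2 s1 s2 = 1).

Definition non_signaling (R : realFieldType) (d c1 c2 : nat)
  (p : 'Z_d -> 'Z_d -> 'I_c1 -> 'I_c2 -> R) : Prop :=
  (forall m1 s1 s2 s2',
     \sum_(m2 : 'Z_d) p m1 m2 s1 s2 = \sum_(m2 : 'Z_d) p m1 m2 s1 s2') /\
  (forall m2 s1 s1' s2,
     \sum_(m1 : 'Z_d) p m1 m2 s1 s2 = \sum_(m1 : 'Z_d) p m1 m2 s1' s2).

(* Main.v *)
Require Import Defs.
From HB Require Import structures.
From mathcomp Require Import all_boot all_order all_algebra.
From mathcomp Require Import ring.
Import Order.TTheory GRing.Theory Num.Theory.
Local Open Scope ring_scope.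

Theorem lemma1 (R : realFieldType) (c1 c2 d : nat)
  (hc1 : (2 <= c1)%N) (hc2 : (2 <= c2)%N) (hd : prime d)
  (f : 'I_c1 -> 'I_c2 -> 'Z_d)
  (hf : ~ exists (g1 : 'I_c1 -> 'Z_d) (g2 : 'I_c2 -> 'Z_d),
          forall s1 s2, f s1 s2 = g1 s1 + g2 s2)
  (p : 'Z_d -> 'Z_d -> 'I_c1 -> 'I_c2 -> R)
  (hp : cond_distr p) (hns : non_signaling p)
  (hsum : forall s1 s2,
     \sum_(m1 : 'Z_d) \sum_(m2 : 'Z_d | m1 + m2 == f s1 s2) p m1 m2 s1 s2 = 1) :
  forall m1 m2 s1 s2,
    p m1 m2 s1 s2 = (if m1 + m2 == f s1 s2 then (d%:R)^-1 else 0).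
Proof.
case: hp => hpos htot; case: hns => hnsA hnsB.
have supp : forall m1 m2 s1 s2, m1 + m2 != f s1 s2 -> p m1 m2 s1 s2 = 0.
  move=> m1 m2 s1 s2 hne.
  have H0 : \sum_(m1 : 'Z_d) \sum_(m2 : 'Z_d | m1 + m2 != f s1 s2) p m1 m2 s1 s2 = 0.
    have := htot s1 s2.
    under eq_bigr => i _ do rewrite (bigID (fun m2 => i + m2 == f s1 s2)) /=.
    rewrite big_split /= hsum => /(canRL (addKr 1)); rewrite addNr; apply.
  have H1 : \sum_(m2 : 'Z_d | m1 + m2 != f s1 s2) p m1 m2 s1 s2 = 0.
    by apply: (psumr_eq0P _ H0) => // i _; apply: sumr_ge0 => j _; apply: hpos.
  by apply: (psumr_eq0P _ H1) => // j _; apply: hpos.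
pose A x s1 s2 := \sum_(m2 : 'Z_d) p x m2 s1 s2.
pose B y s1 s2 := \sum_(m1 : 'Z_d) p m1 y s1 s2.
have Aeq : forall x s1 s2, A x s1 s2 = p x (f s1 s2 - x) s1 s2.
  move=> x s1 s2; rewrite /A (bigD1 (f s1 s2 - x)) //= big1 ?addr0 // => j hj.
  apply: supp; apply: contra hj => /eqP <-; apply/eqP; ring.
have Beq : forall y s1 s2, B y s1 s2 = p (f s1 s2 - y) y s1 s2.
  move=> y s1 s2; rewrite /B (bigD1 (f s1 s2 - y)) //= big1 ?addr0 // => j hj.
  apply: supp; apply: contra hj => /eqP <-; apply/eqP; ring.
have z1 : 'I_c1 by exists 0%N; apply: leq_trans hc1.
have z2 : 'I_c2 by exists 0%N; apply: leq_trans hc2.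
have key : forall x s1 s2, A x s1 s2 = A (f z1 s2 - (f s1 s2 - x)) z1 s2.
  move=> x s1 s2.
  have E1 : A x s1 s2 = B (f s1 s2 - x) s1 s2.
    by rewrite Aeq Beq; congr p; ring.
  rewrite E1 /B (hnsB _ s1 z1 s2) -/(B _ z1 s2) Beq Aeq; congr p; ring.
pose a x s1 := A x s1 z2.
have aA : forall x s1 s2, A x s1 s2 = a x s1 by move=> x s1 s2; apply: hnsA.
have akey : forall x s1 s2, a x s1 = a (x + (f z1 s2 - f s1 s2)) z1.
  move=> x s1 s2; rewrite -(aA x s1 s2) key aA; congr a; ring.
have [s1 [s2 [s2' hne]]] : exists s1 s2 s2', f z1 s2 - f s1 s2 != f z1 s2' - f s1 s2'.
  case: (boolP [exists s1, exists s2, exists s2', f z1 s2 - f s1 s2 != f z1 s2' - f s1 s2']).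
    by move=> /existsP [s1 /existsP [s2 /existsP [s2' h]]]; exists s1, s2, s2'.
  move=> hn; exfalso; apply: hf.
  exists (fun s1 => f s1 z2 - f z1 z2), (fun s2 => f z1 s2) => s1 s2.
  have : ~~ (f z1 s2 - f s1 s2 != f z1 z2 - f s1 z2).
    apply: contra hn => h; apply/existsP; exists s1; apply/existsP; exists s2.
    by apply/existsP; exists z2.
  rewrite negbK => /eqP h.
  have -> : f s1 s2 = f z1 s2 - (f z1 s2 - f s1 s2) by ring.
  rewrite h; ring.
set v := (f z1 s2' - f s1 s2') - (f z1 s2 - f s1 s2).
have ashift : forall y, a y z1 = a (y + v) z1.
  move=> y; rewrite -[y](subrK (f z1 s2 - f s1 s2)) -(akey _ s1 s2) (akey _ s1 s2') /v; congr a; ring.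
have ashiftk : forall k y, a y z1 = a (y + v *+ k) z1.
  elim=> [|k IH] y; first by rewrite mulr0n addr0.
  by rewrite IH ashift mulrS; congr a; ring.
have d1 : (1 < d)%N by apply: prime_gt1.
have vnz : v != 0 by rewrite /v subr_eq0 eq_sym.
have vunit : v \is a GRing.unit.
  rewrite -(natr_Zp v) unitZpE // prime_coprime //.
  apply/negP => hdv.
  have hv : (nat_of_ord v < d)%N by apply: leq_trans (ltn_ord v) _; rewrite Zp_cast.
  move: vnz; rewrite -(natr_Zp v).
  have -> : nat_of_ord v = 0%N.
    apply/eqP; apply: contraLR hv; rewrite -lt0n -leqNgt => h; exact: dvdn_leq.
  by rewrite eqxx.
have aconst : forall y, a y z1 = a 0 z1.
  move=> y; rewrite (ashiftk (nat_of_ord (v^-1 * y)) 0) add0r -mulr_natr natr_Zp.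
  by rewrite mulrA mulrV // mul1r.
have a0 : a 0 z1 = (d%:R)^-1.
  have hs : \sum_(x : 'Z_d) a x z1 = 1 by rewrite -(htot z1 z2).
  move: hs; under eq_bigr => x _ do rewrite aconst.
  rewrite sumr_const card_ord Zp_cast // => hs.
  have dnz : (d%:R : R) != 0 by rewrite pnatr_eq0 -lt0n prime_gt0.
  by apply: (mulIf dnz); rewrite mulVf // mulr_natr.
move=> m1 m2 t1 t2.
case: ifP => h; last by apply: supp; rewrite h.
have -> : m2 = f t1 t2 - m1 by rewrite -(eqP h); ring.
transitivity (A m1 t1 t2); first by rewrite Aeq.
rewrite (aA m1 t1 t2) (akey m1 t1 t2).
rewrite aconst.
exact: a0.

Qed.
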